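(* In the SSBM of the context, let $V^\perp\in\mathbb R^{n\times(n-k)}$ be any matrix whose columns form an orthonormal basis of the orthogonal complement of the column span of $\Theta$. Then $$\mathcal L_{sym}=\begin{bmatrix}\Theta&V^\perp\end{bmatrix}\begin{pmatrix}\bar C&0\\0&\bar\alpha I_{n-k}\end{pmatrix}\begin{bmatrix}\Theta^\top\\(V^\perp)^\top\end{bmatrix},$$ with $\bar C=\bar\alpha I_k-\bar B$, $\bar\alpha=1+\frac p{\bar d}(1-2\eta)$, and $\bar B\in\mathbb R^{k\times k}$ given by $\bar B_{ii}=\frac{n_ip}{\bar d}(1-2\eta)$ and $\bar B_{ii'}=-\frac{\sqrt{n_in_{i'}}\,p}{\bar d}(1-2\eta)$ for $i\ne i'$.
   Context: SSBM: integers $n\ge2,k\ge2$, $p\in(0,1]$, $\eta\in[0,1/2)$, partition of $[n]$ into nonempty clusters $C_1,\dots,C_k$, $|C_i|=n_i$; edges present independently w.p. $p$, signed $+1$ within and $-1$ across clusters, signs flipped independently w.p. $\eta$. $A$ symmetric signed adjacency (zero diagonal), $\bar D=\mathrm{diag}(|A|\mathbf1)$ the signed degree matrix, $\bar d=p(n-1)$ so that $\mathbb E\bar D=\bar dI_n$. $\Theta_{ji}=1/\sqrt{n_i}$ if $j\in C_i$ else 0. $\mathcal L_{sym}=I-(\mathbb E\bar D)^{-1/2}\mathbb E[A](\mathbb E\bar D)^{-1/2}$. *)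

(* Defs.v *)
From HB Require Import structures.
From mathcomp Require Import all_boot all_order all_algebra.
Set Implicit Arguments. Unset Strict Implicit. Unset Printing Implicit Defensive.
Import Order.TTheory GRing.Theory Num.Theory.
Local Open Scope ring_scope.

Section SSBM.
Variables (R : rcfType) (n k : nat).

Definition csize (c : 'I_n -> 'I_k) (i : 'I_k) : nat := #|[set j | c j == i]|.

(* Law of an off-diagonal entry A_{jl} (j <> l) of the signed adjacency matrix:
   with s = +1 if j,l in the same cluster and s = -1 otherwise,
   A_{jl} = s w.p. p(1-eta), -s w.p. p*eta, 0 w.p. 1-p; A_{jj} = 0. *)
Definition ssbm_sign (c : 'I_n -> 'I_k) (j l : 'I_n) : R :=
  if c j == c l then 1 else -1.

(* E[A] : expectation computed entrywise from the law above *)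
Definition expA (c : 'I_n -> 'I_k) (p eta : R) : 'M[R]_n :=
  \matrix_(j, l) if j == l then 0 else
     ssbm_sign c j l * (p * (1 - eta)) + (- ssbm_sign c j l) * (p * eta)
     + 0 * (1 - p).

(* E[Dbar] : Dbar = diag(|A| 1), expectation computed entrywise,
   E|A_{jl}| = 1 * p + 0 * (1 - p) for j <> l. *)
Definition expD (p : R) : 'M[R]_n :=
  \matrix_(j, l) if j == l then
     \sum_(m < n | m != j) (1 * p + 0 * (1 - p)) else 0.

Definition diag_invsqrt (D : 'M[R]_n) : 'M[R]_n :=
  \matrix_(j, l) if j == l then (Num.sqrt (D j j))^-1 else 0.

Definition Lsym (c : 'I_n -> 'I_k) (p eta : R) : 'M[R]_n :=
  1%:M - diag_invsqrt (expD p) *m expA c p eta *m diag_invsqrt (expD p).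

Definition Theta (c : 'I_n -> 'I_k) : 'M[R]_(n, k) :=
  \matrix_(j, i) if c j == i then (Num.sqrt (csize c i)%:R)^-1 else 0.

Definition dbar (p : R) : R := p * (n.-1)%:R.

Definition alphabar (p eta : R) : R := 1 + p / dbar p * (1 - 2 * eta).

Definition Bbar (c : 'I_n -> 'I_k) (p eta : R) : 'M[R]_k :=
  \matrix_(i, i') if i == i' then (csize c i)%:R * p / dbar p * (1 - 2 * eta)
     else - (Num.sqrt ((csize c i)%:R * (csize c i')%:R) * p / dbar p * (1 - 2 * eta)).

Definition Cbar (c : 'I_n -> 'I_k) (p eta : R) : 'M[R]_k :=
  (alphabar p eta)%:M - Bbar c p eta.

Definition is_orth_compl_basis (T : 'M[R]_(n, k)) (V : 'M[R]_(n, n - k)) : Prop :=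
  [/\ V^T *m V = 1%:M,
      T^T *m V = 0 &
      forall x : 'cV[R]_n, T^T *m x = 0 -> exists y : 'cV[R]_(n - k), x = V *m y].

End SSBM.

(* Main.v *)
Require Import Defs.
From HB Require Import structures.
From mathcomp Require Import all_boot all_order all_algebra.
From mathcomp Require Import ring lra.
Import Order.TTheory GRing.Theory Num.Theory.
Local Open Scope ring_scope.

Section Aux.
Variables (R : rcfType) (n k : nat) (c : 'I_n -> 'I_k).

Let t (i : 'I_k) : R := (Num.sqrt (csize c i)%:R)^-1.

Lemma sumTl j (f : 'I_k -> R) : \sum_i Theta R c j i * f i = t (c j) * f (c j).
Proof.
rewrite (bigD1 (c j)) //= big1 ?addr0; first by rewrite mxE eqxx.
by move=> i hi; rewrite mxE eq_sym (negbTE hi) mul0r.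
Qed.

Lemma sumTr l (f : 'I_k -> R) : \sum_i f i * Theta R c l i = f (c l) * t (c l).
Proof.
rewrite (bigD1 (c l)) //= big1 ?addr0; first by rewrite mxE eqxx.
by move=> i hi; rewrite mxE eq_sym (negbTE hi) mulr0.
Qed.

Lemma csize_pos (Hs : forall i : 'I_k, exists j : 'I_n, c j = i) i : (0 < csize c i)%N.
Proof.
have [j hj] := Hs i; rewrite /csize card_gt0; apply/set0Pn; exists j.
by rewrite inE hj.
Qed.

Lemma tsq (Hs : forall i : 'I_k, exists j : 'I_n, c j = i) i :
  t i * t i = ((csize c i)%:R)^-1.
Proof.
rewrite /t -invfM -expr2 sqr_sqrtr ?ler0n //.
Qed.

Lemma ThetaTTheta (Hs : forall i : 'I_k, exists j : 'I_n, c j = i) :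
  (Theta R c)^T *m Theta R c = 1%:M.
Proof.
apply/matrixP => i i'; rewrite !mxE.
rewrite (eq_bigr (fun j => if c j == i then (if c j == i' then t i * t i' else 0) else 0)); last first.
  by move=> j _; rewrite !mxE; case: (c j == i); case: (c j == i'); rewrite ?mul0r ?mulr0.
rewrite -big_mkcond /=.
case: (eqVneq i i') => [<-|ne].
  rewrite (eq_bigr (fun _ => t i * t i)); last by move=> j /eqP ->; rewrite eqxx.
  rewrite sumr_const tsq //.
  have -> : #|[pred j | c j == i]| = csize c i by rewrite /csize cardsE.
  rewrite -[_ *+ csize c i]mulr_natr mulVf //= pnatr_eq0 -lt0n csize_pos //.
rewrite big1 // => j /eqP hj; rewrite hj (negbTE ne) //.
Qed.

Lemma TM j (M : 'M[R]_k) i : (Theta R c *m M) j i = t (c j) * M (c j) i.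
Proof. by rewrite mxE sumTl. Qed.

Lemma TMT j l (M : 'M[R]_k) :
  (Theta R c *m M *m (Theta R c)^T) j l = t (c j) * M (c j) (c l) * t (c l).
Proof.
rewrite mxE (eq_bigr (fun i => t (c j) * M (c j) i * Theta R c l i)); last first.
  by move=> i _; rewrite TM [(Theta R c)^T i l]mxE.
by rewrite sumTr.
Qed.

Lemma projId (T : 'M[R]_(n, k)) V : T^T *m T = 1%:M -> is_orth_compl_basis T V ->
  T *m T^T + V *m V^T = 1%:M.
Proof.
move=> TT [VV TV Hx].
have VT : V^T *m T = 0 by rewrite -[V^T *m T]trmxK trmx_mul trmxK TV trmx0.
have key : forall x : 'cV[R]_n, (1%:M - T *m T^T - V *m V^T) *m x = 0.
  move=> x.
  have [y hy] : exists y, x - T *m (T^T *m x) = V *m y.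
    apply: Hx; rewrite mulmxBr [T^T *m (T *m _)]mulmxA TT mul1mx subrr //.
  have : V^T *m (x - T *m (T^T *m x)) = y by rewrite hy mulmxA VV mul1mx.
  rewrite mulmxBr [V^T *m (T *m _)]mulmxA VT mul0mx subr0 => yE.
  by rewrite !mulmxBl mul1mx -!mulmxA yE -hy subrr ?subrr.
apply/eqP; rewrite eq_sym -subr_eq0 opprD addrA; apply/eqP/matrixP => i j.
have := congr1 (fun M : 'cV[R]_n => M i 0) (key (delta_mx j (0 : 'I_1))).
by rewrite -colE !mxE.
Qed.

End Aux.

Theorem mainTheorem16 (R : rcfType) (n k : nat) (c : 'I_n -> 'I_k) (p eta : R)
  (V : 'M[R]_(n, n - k)) :
  (2 <= n)%N -> (2 <= k)%N -> 0 < p -> p <= 1 -> 0 <= eta -> eta < 2^-1 ->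
  (forall i : 'I_k, exists j : 'I_n, c j = i) ->
  is_orth_compl_basis (Theta R c) V ->
  Lsym c p eta =
    row_mx (Theta R c) V
    *m block_mx (Cbar c p eta) 0 0 ((alphabar n p eta)%:M : 'M[R]_(n - k))
    *m col_mx (Theta R c)^T V^T.
Proof.
move=> n2 k2 p0 p1 e0 e1 Hs HV.
set d := dbar n p.
have d0 : 0 < d by rewrite /d /dbar mulr_gt0 // ltr0n; by case: (n) n2 => [|[|n']].
set q := p / d * (1 - 2 * eta).
set a := alphabar n p eta.
set T := Theta R c.
have DI : diag_invsqrt (expD n p) = ((Num.sqrt d)^-1)%:M.
  apply/matrixP => j l; rewrite !mxE; case: (eqVneq j l) => [->|] //=.
  rewrite eqxx mulr1n mul1r mul0r addr0 sumr_const cardC1 card_ord. by rewrite /d /dbar mulr_natr.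
have L : Lsym c p eta = a%:M - q *: \matrix_(j, l) ssbm_sign R c j l.
  rewrite /Lsym DI mul_scalar_mx -scalemxAl mul_mx_scalar scalerA -invfM -expr2 sqr_sqrtr ?ltW //.
  apply/matrixP => j l; rewrite !mxE; case: (eqVneq j l) => [<-|ne] /=.
    by rewrite /ssbm_sign eqxx /a /alphabar -/d -/q mulr0 subr0; ring.
  rewrite /q mulr0n; field; exact: lt0r_neq0.
rewrite L mul_row_block !mulmx0 ?mul0mx ?addr0 ?add0r mul_row_col.
rewrite /Cbar mulmxBr mulmxBl mul_mx_scalar -scalemxAl mul_mx_scalar -scalemxAl.
rewrite addrAC -scalerDr projId ?ThetaTTheta //.
rewrite scalemx1; congr (_ - _).
apply/matrixP => j l; rewrite TMT !mxE /ssbm_sign -/d.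
have sp : forall i, 0 < Num.sqrt (csize c i)%:R :> R.
  by move=> i; rewrite sqrtr_gt0 ltr0n csize_pos.
have dn0 : d != 0 by exact: lt0r_neq0.
case: eqP => [E|_].
  rewrite -E; have := sp (c j); set s := Num.sqrt _ => s0.
  have ss : s * s = (csize c (c j))%:R by rewrite -expr2 sqr_sqrtr ?ler0n.
  by rewrite -ss /q; field; rewrite dn0 lt0r_neq0.
rewrite (@sqrtrM R _ _ (ler0n _ _)).
have := sp (c j); have := sp (c l).
set s1 := Num.sqrt (csize c (c j))%:R; set s2 := Num.sqrt (csize c (c l))%:R => s2p s1p.
rewrite /q; field; rewrite dn0 !lt0r_neq0 //.
Qed.
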